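(* Let $d\ge 7$ and let $G$ be a $d$-regular graph with girth $5$. Suppose there exists a vertex $x\in V(G)$, with neighbors $x_1,\dots,x_d$, and two distinct indices $i\ne j$ in $[d]$ such that every neighbor of every vertex of $X_i\cup X_j$ lies in $N_2(x)$ (equivalently, no vertex of $X_i\cup X_j$ has a neighbor at distance $3$ from $x$). Then $\chi_b(G)=d+1$.
   Context: $X_t=N(x_t)\setminus\{x\}$ is the $t$-th bunch of $x$. $N_2(x)=N(x)\cup S_2(x)$, where $S_2(x)$ is the set of vertices at distance exactly $2$ from $x$. A proper $k$-coloring is a b-coloring if every color class contains a vertex whose closed neighborhood contains all $k$ colors; $\chi_b(G)$ is the largest $k$ for which $G$ has a b-coloring with $k$ colors. *)

(* Defs.v *)
From mathcomp Require Import all_boot.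
Set Implicit Arguments. Unset Strict Implicit. Unset Printing Implicit Defensive.

Section Graphs.
Variable T : finType.
Variable e : rel T.

Definition simple_graph : Prop := irreflexive e /\ symmetric e.

Definition nbhd (x : T) : {set T} := [set y | e x y].

Definition cnbhd (x : T) : {set T} := x |: nbhd x.

Definition regular (d : nat) : Prop := forall v : T, #|nbhd v| = d.

Definition S2 (x : T) : {set T} :=
  [set y | (y != x) && ~~ e x y && [exists z, e x z && e z y]].

Definition N2 (x : T) : {set T} := nbhd x :|: S2 x.

Definition bunch (x xt : T) : {set T} := nbhd xt :\ x.

Definition has_cycle (k : nat) : Prop :=
  3 <= k /\ exists c : 'I_k -> T,
    injective c /\ forall i : 'I_k, e (c i) (c (ordS i)).

Definition girth_eq (g : nat) : Prop :=
  has_cycle g /\ forall k, k < g -> ~ has_cycle k.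

Definition proper_coloring (k : nat) (c : {ffun T -> 'I_k}) : bool :=
  [forall x, forall y, e x y ==> (c x != c y)].

Definition is_bcoloring (k : nat) (c : {ffun T -> 'I_k}) : bool :=
  proper_coloring c &&
  [forall a : 'I_k, exists v, (c v == a) &&
     [forall b : 'I_k, exists u, (u \in cnbhd v) && (c u == b)]].

Definition b_colorable (k : nat) : bool :=
  [exists c : {ffun T -> 'I_k}, is_bcoloring c].

(* b-chromatic number: largest k admitting a b-colouring with k colours.
   Every colour class of a b-colouring is nonempty, so k <= #|T|. *)
Definition b_chromatic : nat := \max_(k < #|T|.+1 | b_colorable k) k.

End Graphs.

(* Main.v *)
Require Import Defs.
From mathcomp Require Import all_boot zify.
Set Implicit Arguments. Unset Strict Implicit. Unset Printing Implicit Defensive.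

Section Rot.
Variable T : eqType.
Definition nxt (n i : nat) := if i.+1 == n then 0 else i.+1.
Definition rot1 (s : seq T) (y : T) := nth y s (nxt (size s) (index y s)).

Lemma nxt_lt n i : i < n -> nxt n i < n.
Proof. rewrite /nxt; case: eqP; lia. Qed.

Lemma rot1_mem s y : y \in s -> rot1 s y \in s.
Proof. by move=> Hy; apply: mem_nth; apply: nxt_lt; rewrite index_mem. Qed.

Lemma index_rot1 s y : uniq s -> y \in s -> index (rot1 s y) s = nxt (size s) (index y s).
Proof. by move=> Hu Hy; rewrite /rot1 index_uniq // nxt_lt // index_mem. Qed.

Lemma rot1_neq s y : uniq s -> 2 <= size s -> y \in s -> rot1 s y != y.
Proof.
move=> Hu H2 Hy; apply/eqP => E.
have := index_rot1 Hu Hy; rewrite E.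
have := Hy; rewrite -index_mem /nxt; case: eqP; lia.
Qed.

Lemma rot1_inj s y y' : uniq s -> y \in s -> y' \in s -> rot1 s y = rot1 s y' -> y = y'.
Proof.
move=> Hu Hy Hy' E.
have := index_rot1 Hu Hy; rewrite E index_rot1 //.
have := Hy; have := Hy'; rewrite -!index_mem /nxt.
move=> h1 h2 H.
have Hi : index y s = index y' s.
  by move: H; case: eqP; case: eqP; lia.
by rewrite -(nth_index y Hy) -(nth_index y Hy') Hi; apply: set_nth_default; rewrite index_mem.
Qed.
End Rot.

Section Gen.
Variable T : finType.

Lemma card_le_rel (Y Z : {set T}) (R : T -> T -> bool) :
  (forall y, y \in Y -> exists z, (z \in Z) && R y z) ->
  (forall y y' z, y \in Y -> y' \in Y -> z \in Z -> R y z -> R y' z -> y = y') ->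
  #|Y| <= #|Z|.
Proof.
move=> Hex Hinj.
pose f y := odflt y [pick z in Z | R y z].
have Hf : forall y, y \in Y -> (f y \in Z) && R y (f y).
  move=> y Hy; rewrite /f; case: pickP => [z /andP[Hz Hr] /=|H].
    by rewrite Hz Hr.
  by case: (Hex y Hy) => z /andP[Hz Hr]; move: (H z); rewrite Hz Hr.
rewrite -(card_in_imset (f := f)); last first.
  move=> y y' Hy Hy' E.
  move: (Hf y Hy) (Hf y' Hy') => /andP[Hz Hr] /andP[_ Hr'].
  by apply: (Hinj y y' (f y)) => //; rewrite E.
apply: subset_leq_card; apply/subsetP => z /imsetP[y Hy ->].
by case/andP: (Hf y Hy).
Qed.

Lemma inj_surj n (S : {set T}) (f : T -> 'I_n) : #|S| = n -> {in S &, injective f} ->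
  forall a, exists2 y, y \in S & f y = a.
Proof.
move=> HS Hinj a.
have E : f @: S = [set: 'I_n].
  apply/eqP; rewrite eqEcard subsetT cardsT card_ord card_in_imset // HS leqnn.
  by [].
have : a \in f @: S by rewrite E inE.
by case/imsetP => y Hy ->; exists y.
Qed.

Variable e : rel T.
Hypothesis Hirr : irreflexive e.
Hypothesis Hsym : symmetric e.

Lemma card_cnbhd d v : regular e d -> #|cnbhd e v| = d.+1.
Proof.
move=> Hreg; rewrite /cnbhd cardsU1 Hreg.
by rewrite /nbhd inE Hirr.
Qed.

Lemma card_bunch d x t : regular e d -> e x t -> #|bunch e x t| = d.-1.
Proof.
move=> Hreg Hxt; rewrite /bunch.
have := cardsD1 x (nbhd e t); rewrite Hreg /nbhd inE Hsym Hxt.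
by move=> ->.
Qed.





Lemma greedy n (D : {set T}) (c0 : T -> 'I_n) :
  (forall v, #|nbhd e v| < n) ->
  (forall u v, u \in D -> v \in D -> e u v -> c0 u != c0 v) ->
  exists c : T -> 'I_n, (forall v, v \in D -> c v = c0 v) /\ (forall u v, e u v -> c u != c v).
Proof.
move=> Hdeg; move Em : #|~: D| => m; elim: m D c0 Em => [|m IH] D c0 Em Hp.
  have HD : forall v, v \in D.
    move=> v; move/eqP: Em; rewrite cards_eq0 => /eqP E.
    by apply/negPn; rewrite -in_setC E inE.
  by exists c0; split=> // u v Huv; apply: Hp; rewrite ?HD.
have [v Hv] : exists v, v \in ~: D.
  by apply/set0Pn; rewrite -card_gt0 Em.
have [a Ha] : exists a, a \notin c0 @: nbhd e v.
  case: (pickP (fun a => a \notin c0 @: nbhd e v)) => [a Ha|H]; first by exists a.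
  have : #|[set: 'I_n]| <= #|c0 @: nbhd e v|.
    apply: subset_leq_card; apply/subsetP => b _; by move: (H b) => /negbFE.
  rewrite cardsT card_ord => H1.
  have := leq_trans H1 (leq_imset_card c0 (nbhd e v)).
  by rewrite leqNgt Hdeg.
pose c1 y := if y == v then a else c0 y.
have vD : v \notin D by rewrite -in_setC.
have [c [Hc1 Hc2]] : exists c : T -> 'I_n, (forall y, y \in v |: D -> c y = c1 y) /\
    (forall u w, e u w -> c u != c w).
  apply: IH.
    have -> : ~: (v |: D) = ~: D :\ v by apply/setP => y; rewrite !inE negb_or.
    have := cardsD1 v (~: D); rewrite Hv Em => /eqP; rewrite eqSS => /eqP <-.
    by [].
  move=> u w; rewrite !inE /c1 => Hu Hw Huw.
  case: (eqVneq u v) => [Euv|nuv]; case: (eqVneq w v) => [Ewv|nwv].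
  - by move: Huw; rewrite Euv Ewv Hirr.
  - apply: contraNneq Ha => ->; apply/imsetP; exists w => //.
    by rewrite inE -Euv.
  - apply: contraNneq Ha => <-; apply/imsetP; exists u => //.
    by rewrite inE Hsym -Ewv.
  - apply: Hp => //; [move: Hu; rewrite (negbTE nuv) | move: Hw; rewrite (negbTE nwv)] => //.
exists c; split=> // y Hy.
rewrite Hc1 ?inE ?Hy ?orbT // /c1.
case: eqP => // E; by move: vD; rewrite -E Hy.
Qed.

End Gen.

Section Girth.
Variable T : finType.
Variable e : rel T.
Hypothesis Hirr : irreflexive e.

Lemma no_tri_of : ~ has_cycle e 3 -> forall a b c, e a b -> e b c -> e c a -> False.
Proof.
move=> Hn a b c Hab Hbc Hca; apply: Hn; split=> //.
exists (fun i : 'I_3 => nth a [:: a; b; c] i); split.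
  have nab : a != b by apply: contraTneq Hab => ->; rewrite Hirr.
  have nbc : b != c by apply: contraTneq Hbc => ->; rewrite Hirr.
  have nca : c != a by apply: contraTneq Hca => ->; rewrite Hirr.
  move=> [[|[|[|i]]] Hi] [[|[|[|j]]] Hj] //= E; try (apply: val_inj => //=);
  by move: nab nbc nca; rewrite ?E ?eqxx.
by move=> [[|[|[|i]]] Hi].
Qed.

Lemma no_sq_of : ~ has_cycle e 4 -> forall a b c f, e a b -> e b c -> e c f -> e f a ->
  a != c -> b != f -> False.
Proof.
move=> Hn a b c f Hab Hbc Hcf Hfa nac nbf; apply: Hn; split=> //.
exists (fun i : 'I_4 => nth a [:: a; b; c; f] i); split.
  have nab : a != b by apply: contraTneq Hab => ->; rewrite Hirr.
  have nbc : b != c by apply: contraTneq Hbc => ->; rewrite Hirr.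
  have ncf : c != f by apply: contraTneq Hcf => ->; rewrite Hirr.
  have nfa : f != a by apply: contraTneq Hfa => ->; rewrite Hirr.
  move=> [[|[|[|[|i]]]] Hi] [[|[|[|[|j]]]] Hj] //= E; try (apply: val_inj => //=);
  by move: nab nbc ncf nfa nac nbf; rewrite ?E ?eqxx.
by move=> [[|[|[|[|i]]]] Hi].
Qed.
End Girth.

Section Struct.
Variable T : finType.
Variable e : rel T.
Variable d : nat.
Hypothesis Hirr : irreflexive e.
Hypothesis Hsym : symmetric e.
Hypothesis Hreg : regular e d.
Hypothesis Hd : 4 <= d.
Hypothesis Htri : forall a b c, e a b -> e b c -> e c a -> False.
Hypothesis Hsq : forall a b c f, e a b -> e b c -> e c f -> e f a -> a != c -> b != f -> False.

Lemma neq_of a b : e a b -> a != b.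
Proof. by move=> H; apply: contraTneq H => ->; rewrite Hirr. Qed.

Lemma uniq_cn a b y y' : a != b -> e a y -> e y b -> e a y' -> e y' b -> y = y'.
Proof.
move=> nab H1 H2 H3 H4; case: (eqVneq y y') => // nyy.
by case: (Hsq H1 H2 _ _ nab nyy); rewrite Hsym.
Qed.

Variable x : T.
Notation A := (nbhd e x).

Lemma inA y : (y \in A) = e x y.
Proof. by rewrite inE. Qed.

Lemma inB t w : (w \in bunch e x t) = (w != x) && e t w.
Proof. by rewrite !inE. Qed.

Lemma bunch_notA t w : e x t -> w \in bunch e x t -> (w \notin A) && (w != x).
Proof.
move=> Ht; rewrite inB => /andP[-> Hw]; rewrite inA andbT.
by apply/negP => Hxw; apply: (Htri Ht Hw); rewrite Hsym.
Qed.

Lemma E1 t0 t v : e x t0 -> e x t -> t != t0 -> v \in bunch e x t0 ->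
  (forall u, e v u -> u \in N2 e x) -> exists w, e v w && e t w.
Proof.
move=> Ht0 Ht ntt Hv HN.
case/andP: (bunch_notA Ht0 Hv) => vA vx.
move: Hv; rewrite inB => /andP[_ Ht0v].
case: (boolP [exists w, e v w && e t w]) => [/existsP //|Hno].
have Hno' : forall w, e v w -> e t w -> False.
  by move=> w H1 H2; move/existsP: Hno; apply; exists w; rewrite H1 H2.
exfalso.
have: #|nbhd e v :\ t0| <= #|(A :\ t0) :\ t|.
  apply: (@card_le_rel _ _ _ (fun y z => e z y)).
    move=> y; rewrite !inE => /andP[nyt Hvy].
    have := HN y Hvy; rewrite !inE => /orP[Hxy|].
      have E1 : e y v by rewrite Hsym.
      have E2 : e v t0 by rewrite Hsym.
      have E3 : e t0 x by rewrite Hsym.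
      have E4 : x != v by rewrite eq_sym.
      by case: (Hsq Hxy E1 E2 E3 E4 nyt).
    case/andP=> /andP[nyx nxy] /existsP[z /andP[Hxz Hzy]].
    exists z; rewrite Hzy andbT !inE Hxz andbT.
    apply/andP; split.
      by apply/eqP => Ezt; apply: (Hno' y) => //; rewrite -Ezt.
    apply: contraTneq Hzy => ->; apply/negP => H.
    by apply: (Htri Ht0v Hvy); rewrite Hsym.
  move=> y y' z; rewrite !inE => /andP[_ Hvy] /andP[_ Hvy'] /andP[_ /andP[_ Hxz]] Hzy Hzy'.
  apply: (uniq_cn (a := v) (b := z)) => //; try by rewrite Hsym.
  by apply: contraNneq vA => ->; rewrite inA.
have Hc1 := cardsD1 t0 (nbhd e v).
have Hc2 := cardsD1 t0 A.
have Hc3 := cardsD1 t (A :\ t0).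
move: Hc1 Hc2 Hc3; rewrite (Hreg v) (Hreg x) !inE Hsym Ht0v ntt Ht Ht0 /=.
lia.
Qed.

Variables xi xj v0 : T.
Hypothesis Hxi : e x xi.
Hypothesis Hxj : e x xj.
Hypothesis Hij : xi != xj.
Hypothesis HN : forall v u, v \in bunch e x xi :|: bunch e x xj -> e v u -> u \in N2 e x.
Hypothesis Hv0 : v0 \in bunch e x xi.
Notation Xi := (bunch e x xi).
Notation Xj := (bunch e x xj).

Lemma HNi v : v \in Xi -> forall u, e v u -> u \in N2 e x.
Proof. by move=> H u Hu; apply: (HN _ Hu); rewrite inE H. Qed.
Lemma HNj v : v \in Xj -> forall u, e v u -> u \in N2 e x.
Proof. by move=> H u Hu; apply: (HN _ Hu); rewrite inE H orbT. Qed.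

Lemma inB_uniq t w y y' : w != t -> y \in bunch e x t -> y' \in bunch e x t ->
  e w y -> e w y' -> y = y'.
Proof.
rewrite !inB => nwt /andP[_ H1] /andP[_ H2] H3 H4.
by apply: (uniq_cn (a := t) (b := w)); rewrite // ?(Hsym y) ?(Hsym y') // eq_sym.
Qed.

Lemma cardB t : e x t -> #|bunch e x t| = d.-1.
Proof. by move=> H; apply: (card_bunch Hsym (d := d)). Qed.

Lemma toXj a w : e x a -> a != xj -> w \in bunch e x a -> exists u, (u \in Xj) && e w u.
Proof.
move=> Ha naj Hw.
case: (boolP [exists u, (u \in Xj) && e w u]) => [/existsP //|Hno].
have Hno' : forall u, u \in Xj -> e w u -> False.
  by move=> u H1 H2; move/existsP: Hno; apply; exists u; rewrite H1 H2.
exfalso.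
have: #|Xj| <= #|bunch e x a :\ w|.
  apply: (@card_le_rel _ _ _ (fun u z => e u z)).
    move=> u Hu.
    have [z /andP[Huz Haz]] := E1 Hxj Ha naj Hu (HNj Hu).
    exists z; rewrite Huz andbT !inE Haz andbT.
    case/andP: (bunch_notA Hxj Hu) => uA _.
    apply/andP; split.
      by apply/eqP => Ezw; apply: (Hno' u Hu); rewrite Hsym -Ezw.
    apply: contraNneq uA => Ezx; by rewrite inA Hsym -Ezx.
  move=> u u' z Hu Hu' Hz H1 H2.
  have zB : z \in bunch e x a by move: Hz; rewrite inE => /andP[].
  case/andP: (bunch_notA Ha zB) => zA _.
  apply: (inB_uniq (t := xj) (w := z)) => //; try by rewrite Hsym.
  by apply: contraNneq zA => ->; rewrite inA.
have := cardsD1 w (bunch e x a); rewrite Hw !cardB //.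
lia.
Qed.

Definition nbin (Y : {set T}) w := odflt w [pick y in Y | e w y].
Lemma nbinP (Y : {set T}) w : (exists y, (y \in Y) && e w y) -> (nbin Y w \in Y) && e w (nbin Y w).
Proof.
move=> [y Hy]; rewrite /nbin; case: pickP => [z Hz //|H].
by move: (H y); rewrite Hy.
Qed.

Definition beta w := nbin Xj w.
Lemma betaP a w : e x a -> a != xj -> w \in bunch e x a -> (beta w \in Xj) && e w (beta w).
Proof. by move=> Ha naj Hw; apply: nbinP; apply: toXj Hw. Qed.

Lemma x_notXj : x \notin Xj.
Proof. by rewrite inB eqxx. Qed.
Lemma xj_notXj : xj \notin Xj.
Proof. by rewrite inB Hirr andbF. Qed.
Lemma Xj_notA u : u \in Xj -> (u \notin A) && (u != x).
Proof. exact: bunch_notA. Qed.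

Definition u0 := beta v0.
Lemma u0P : (u0 \in Xj) && e v0 u0.
Proof. exact: (betaP Hxi Hij Hv0). Qed.

Definition cn s := odflt s [pick w | e v0 w && e s w].
Lemma cnP s : e x s -> s != xi -> (cn s \in bunch e x s) && e v0 (cn s).
Proof.
move=> Hs nsi; rewrite /cn; case: pickP => [w /andP[H1 H2]|H].
  rewrite H1 inB H2 !andbT /=.
  case/andP: (bunch_notA Hxi Hv0) => v0A _.
  by apply: contraNneq v0A => Ewx; rewrite inA Hsym -Ewx.
by have [w /andP[H1 H2]] := E1 Hxi Hs nsi Hv0 (HNi Hv0); move: (H w); rewrite H1 H2.
Qed.

Definition L := enum (Xj :\ u0).
Definition sig u := rot1 L u.
Lemma L_mem u : (u \in L) = (u \in Xj :\ u0).
Proof. by rewrite mem_enum. Qed.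
Lemma L_uniq : uniq L.
Proof. exact: enum_uniq. Qed.
Lemma L_size : 2 <= size L.
Proof.
rewrite /L -cardE.
have := cardsD1 u0 Xj; case/andP: u0P => -> _; rewrite cardB //; lia.
Qed.
Lemma sigP u : u \in Xj :\ u0 -> (sig u \in Xj :\ u0) && (sig u != u).
Proof.
rewrite -!L_mem => Hu; rewrite rot1_mem // rot1_neq //; [exact L_uniq| exact L_size].
Qed.
Lemma sig_inj u u' : u \in Xj :\ u0 -> u' \in Xj :\ u0 -> sig u = sig u' -> u = u'.
Proof. rewrite -!L_mem; apply: rot1_inj; exact: L_uniq. Qed.

Definition c0 z :=
  if z == x then x
  else if z == xi then xj
  else if z == xj then u0
  else if z \in A then beta (cn z)
  else if z \in Xj then (if z == u0 then xj else sig z)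
  else if e v0 z then xj else beta z.

Lemma inAx s : s \in A -> s != x.
Proof. by rewrite inA => H; rewrite eq_sym neq_of. Qed.
Lemma xi_A : xi \in A. Proof. by rewrite inA. Qed.
Lemma xj_A : xj \in A. Proof. by rewrite inA. Qed.

Lemma bunch_disj a b z : e x a -> e x b -> a != b -> z \in bunch e x a -> z \notin bunch e x b.
Proof.
move=> Ha Hb nab; rewrite !inB => /andP[nzx Haz]; apply/negP => /andP[_ Hbz].
have := uniq_cn nab (_ : e a x) Hb Haz (_ : e z b).
by move=> H; move: nzx; rewrite -H ?eqxx // Hsym.
Qed.

Lemma v0_notXj : v0 \notin Xj.
Proof. exact: (bunch_disj Hxi Hxj Hij Hv0). Qed.

Lemma c0_x : c0 x = x.
Proof. by rewrite /c0 eqxx. Qed.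
Lemma c0_xi : c0 xi = xj.
Proof. by rewrite /c0 (negbTE (inAx xi_A)) eqxx. Qed.
Lemma c0_xj : c0 xj = u0.
Proof. by rewrite /c0 (negbTE (inAx xj_A)) eq_sym (negbTE Hij) eqxx. Qed.
Lemma c0_s s : s \in A -> s != xi -> s != xj -> c0 s = beta (cn s).
Proof. by move=> H H1 H2; rewrite /c0 (negbTE (inAx H)) (negbTE H1) (negbTE H2) H. Qed.
Lemma c0_Xj u : u \in Xj -> c0 u = if u == u0 then xj else sig u.
Proof.
move=> H; case/andP: (Xj_notA H) => uA ux.
have ui : u != xi by apply: contraNneq uA => ->; exact: xi_A.
have uj : u != xj by apply: contraNneq uA => ->; exact: xj_A.
by rewrite /c0 (negbTE ux) (negbTE ui) (negbTE uj) (negbTE uA) H.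
Qed.
Lemma c0_R z : z != x -> z \notin A -> z \notin Xj -> c0 z = if e v0 z then xj else beta z.
Proof.
move=> zx zA zXj.
have ui : z != xi by apply: contraNneq zA => ->; exact: xi_A.
have uj : z != xj by apply: contraNneq zA => ->; exact: xj_A.
by rewrite /c0 (negbTE zx) (negbTE ui) (negbTE uj) (negbTE zA) (negbTE zXj).
Qed.
Lemma c0_B a z : e x a -> a != xj -> z \in bunch e x a -> c0 z = if e v0 z then xj else beta z.
Proof.
move=> Ha naj Hz; case/andP: (bunch_notA Ha Hz) => zA zx.
by apply: c0_R => //; apply: (bunch_disj Ha Hxj naj Hz).
Qed.

Lemma beta_inj a z z' : e x a -> a != xj -> z \in bunch e x a -> z' \in bunch e x a ->
  beta z = beta z' -> z = z'.
Proof.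
move=> Ha naj Hz Hz' E.
case/andP: (betaP Ha naj Hz) => bX bz.
case/andP: (betaP Ha naj Hz') => _; rewrite -E => bz'.
case/andP: (Xj_notA bX) => bA _.
apply: (inB_uniq (t := a) (w := beta z)) => //; try by rewrite Hsym.
by apply: contraNneq bA => ->; rewrite inA.
Qed.

Lemma inj_split (S P : {set T}) (f : T -> T) p q a b :
  a \in S -> b \in S -> f a = p -> f b = q -> p != q -> p \notin P -> q \notin P ->
  (forall z, z \in S -> z != a -> z != b -> f z \in P) ->
  {in S :\ a :\ b &, injective f} -> {in S &, injective f}.
Proof.
move=> Ha Hb fa fb npq pP qP HP Hinj z z' Hz Hz'.
have HS : forall y, y \in S -> y != a -> y != b -> y \in S :\ a :\ b.
  by move=> y H1 H2 H3; rewrite !inE H1 H2 H3.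
have nab : a != b by apply: contra_neq npq => E; rewrite -fa -fb E.
case: (eqVneq z a) => [->|za]; case: (eqVneq z' a) => [->|z'a] //.
- case: (eqVneq z' b) => [->|z'b]; first by rewrite fa fb => E; move: npq; rewrite E eqxx.
  by rewrite fa => E; move: (HP z' Hz' z'a z'b); rewrite -E (negbTE pP).
- case: (eqVneq z b) => [->|zb]; first by rewrite fa fb => E; move: npq; rewrite E eqxx.
  by rewrite fa => E; move: (HP z Hz za zb); rewrite E (negbTE pP).
- case: (eqVneq z b) => [->|zb]; case: (eqVneq z' b) => [->|z'b] //.
  + by rewrite fb => E; move: (HP z' Hz' z'a z'b); rewrite -E (negbTE qP).
  + by rewrite fb => E; move: (HP z Hz za zb); rewrite E (negbTE qP).
  + by apply: Hinj; rewrite ?HS.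
Qed.

Lemma inC b z : (z \in cnbhd e b) = (z == b) || e b z.
Proof. by rewrite !inE. Qed.

Lemma u0X : u0 \in Xj. Proof. by case/andP: u0P. Qed.
Lemma v0u0 : e v0 u0. Proof. by case/andP: u0P. Qed.

Lemma bcn s : e x s -> s != xi -> s != xj -> (beta (cn s) \in Xj) && (beta (cn s) != u0).
Proof.
move=> Hs si sj; case/andP: (cnP Hs si) => cB vc.
case/andP: (betaP Hs sj cB) => -> bc /=.
apply/eqP => E; apply: (Htri vc bc); rewrite E Hsym; exact: v0u0.
Qed.

Lemma inj_x : {in cnbhd e x &, injective c0}.
Proof.
have Hrest : forall z, z \in cnbhd e x -> z != x -> z != xi -> (z \in A) && (z != xi).
  by move=> z; rewrite inC inA => /orP[/eqP->|->]; rewrite ?eqxx.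
apply: (inj_split (P := Xj) (a := x) (b := xi) (p := x) (q := xj)).
- by rewrite inC eqxx.
- by rewrite inC Hxi orbT.
- exact: c0_x.
- exact: c0_xi.
- by rewrite eq_sym (inAx xj_A).
- exact: x_notXj.
- exact: xj_notXj.
- move=> z Hz zx zi; case/andP: (Hrest z Hz zx zi) => zA _.
  case: (eqVneq z xj) => [->|zj]; first by rewrite c0_xj u0X.
  have Hs : e x z by rewrite -inA.
  by rewrite c0_s //; case/andP: (bcn Hs zi zj).
- move=> z z'; rewrite !inE => /andP[zi /andP[zx Hz]] /andP[z'i /andP[z'x Hz']].
  have ZA : z \in A by move: Hz; rewrite (negbTE zx) /= inA.
  have ZA' : z' \in A by move: Hz'; rewrite (negbTE z'x) /= inA.
  have key : forall s, s \in A -> s != xi -> s != xj -> u0 <> c0 s.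
    move=> s sA si sj; rewrite c0_s // => E.
    have Hs : e x s by rewrite -inA.
    by case/andP: (bcn Hs si sj) => _; rewrite -E eqxx.
  case: (eqVneq z xj) => [->|zj]; case: (eqVneq z' xj) => [->|z'j] //.
  + by rewrite c0_xj => E; case: (key z' ZA' z'i z'j).
  + by rewrite c0_xj => E; case: (key z ZA zi zj).
  rewrite !c0_s // => E.
  have Hs : e x z by rewrite -inA.
  have Hs' : e x z' by rewrite -inA.
  case/andP: (cnP Hs zi) => cB vc; case/andP: (cnP Hs' z'i) => cB' vc'.
  case/andP: (betaP Hs zj cB) => bX bc; case/andP: (betaP Hs' z'j cB') => _ bc'.
  have Ecn : cn z = cn z'.
    apply: (uniq_cn (a := v0) (b := beta (cn z))) => //; last by rewrite E.
    by apply: contraNneq v0_notXj => ->.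
  case/andP: (bunch_notA Hs cB) => _ cx.
  move: cB cB'; rewrite !inB Ecn => /andP[_ H1] /andP[_ H2].
  by apply: (uniq_cn (a := x) (b := cn z')) => //; rewrite eq_sym -Ecn.
Qed.

Lemma v0_notA : (v0 \notin A) && (v0 != x).
Proof. exact: (bunch_notA Hxi Hv0). Qed.

Lemma c0_Xi z : z \in Xi -> c0 z = beta z.
Proof.
move=> Hz; rewrite (c0_B Hxi Hij Hz).
case: ifP => // Hvz; exfalso.
move: Hz Hv0; rewrite !inB => /andP[_ H1] /andP[_ H2].
by apply: (Htri Hvz (_ : e z xi) H2); rewrite Hsym.
Qed.

Lemma inj_xi : {in cnbhd e xi &, injective c0}.
Proof.
have Hrest : forall z, z \in cnbhd e xi -> z != x -> z != xi -> z \in Xi.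
  by move=> z; rewrite inC inB => /orP[/eqP->|->]; rewrite ?eqxx // => ->.
apply: (inj_split (P := Xj) (a := x) (b := xi) (p := x) (q := xj)).
- by rewrite inC Hsym Hxi orbT.
- by rewrite inC eqxx.
- exact: c0_x.
- exact: c0_xi.
- by rewrite eq_sym (inAx xj_A).
- exact: x_notXj.
- exact: xj_notXj.
- move=> z Hz zx zi; have HX := Hrest z Hz zx zi.
  by rewrite c0_Xi //; case/andP: (betaP Hxi Hij HX).
- move=> z z'; rewrite !inE => /andP[zi /andP[zx Hz]] /andP[z'i /andP[z'x Hz']].
  have HX : z \in Xi by apply: Hrest; rewrite ?inC.
  have HX' : z' \in Xi by apply: Hrest; rewrite ?inC.
  rewrite !c0_Xi // => E; exact: (beta_inj Hxi Hij HX HX' E).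
Qed.

Lemma inj_xj : {in cnbhd e xj &, injective c0}.
Proof.
have Hrest : forall z, z \in cnbhd e xj -> z != x -> z != xj -> z \in Xj.
  by move=> z; rewrite inC inB => /orP[/eqP->|->]; rewrite ?eqxx // => ->.
have u0j : e xj u0 by move: u0X; rewrite inB => /andP[].
have c0u0 : c0 u0 = xj by rewrite c0_Xj ?u0X ?eqxx.
apply: (inj_split (P := Xj) (a := x) (b := u0) (p := x) (q := xj)).
- by rewrite inC Hsym Hxj orbT.
- by rewrite inC u0j orbT.
- exact: c0_x.
- exact: c0u0.
- by rewrite eq_sym (inAx xj_A).
- exact: x_notXj.
- exact: xj_notXj.
- move=> z Hz zx zu; case: (eqVneq z xj) => [->|zj]; first by rewrite c0_xj u0X.
  have HX := Hrest z Hz zx zj.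
  rewrite c0_Xj // (negbTE zu).
  have : z \in Xj :\ u0 by rewrite !inE zu -inB.
  by move/sigP => /andP[]; rewrite inE => /andP[].
- move=> z z'; rewrite !inE => /andP[zu /andP[zx Hz]] /andP[z'u /andP[z'x Hz']].
  have key : forall y, y \in Xj -> y != u0 -> c0 y = sig y /\ (sig y \in Xj :\ u0) /\ (y \in Xj :\ u0).
    move=> y yX yu; rewrite c0_Xj // (negbTE yu).
    have Hy : y \in Xj :\ u0 by rewrite !inE yu -inB.
    by case/andP: (sigP Hy).
  case: (eqVneq z xj) => [->|zj]; case: (eqVneq z' xj) => [->|z'j] //.
  + have HX : z' \in Xj by apply: Hrest; rewrite ?inC.
    case: (key z' HX z'u) => -> [H _]; rewrite c0_xj => E.
    by move: H; rewrite -E !inE eqxx.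
  + have HX : z \in Xj by apply: Hrest; rewrite ?inC.
    case: (key z HX zu) => -> [H _]; rewrite c0_xj => E.
    by move: H; rewrite E !inE eqxx.
  + have HX : z \in Xj by apply: Hrest; rewrite ?inC.
    have HX' : z' \in Xj by apply: Hrest; rewrite ?inC.
    case: (key z HX zu) => -> [_ H1]; case: (key z' HX' z'u) => -> [_ H2].
    exact: sig_inj.
Qed.

Lemma c0_Bs s z : e x s -> s != xi -> s != xj -> z \in bunch e x s -> z != cn s -> c0 z = beta z.
Proof.
move=> Hs si sj Hz zc; rewrite (c0_B Hs sj Hz); case: ifP => // Hvz.
case/andP: (cnP Hs si) => cB vc.
case/andP: v0_notA => vA _.
have : z = cn s.
  apply: (inB_uniq (t := s) (w := v0)) => //.
  by apply: contraNneq vA => ->; rewrite inA.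
by move/eqP: zc.
Qed.

Lemma inj_s s : e x s -> s != xi -> s != xj -> {in cnbhd e s &, injective c0}.
Proof.
move=> Hs si sj.
case/andP: (cnP Hs si) => cB vc.
have Hrest : forall z, z \in cnbhd e s -> z != x -> z != s -> z \in bunch e x s.
  by move=> z; rewrite inC inB => /orP[/eqP->|->]; rewrite ?eqxx // => ->.
have c0c : c0 (cn s) = xj by rewrite (c0_B Hs sj cB) vc.
have sA : s \in A by rewrite inA.
apply: (inj_split (P := Xj) (a := x) (b := cn s) (p := x) (q := xj)).
- by rewrite inC Hsym Hs orbT.
- by move: cB; rewrite inB inC => /andP[_ ->]; rewrite orbT.
- exact: c0_x.
- exact: c0c.
- by rewrite eq_sym (inAx xj_A).
- exact: x_notXj.
- exact: xj_notXj.
- move=> z Hz zx zc; case: (eqVneq z s) => [->|zs].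
    by rewrite c0_s //; case/andP: (bcn Hs si sj).
  have HB := Hrest z Hz zx zs.
  by rewrite (c0_Bs Hs si sj HB zc); case/andP: (betaP Hs sj HB).
- move=> z z'; rewrite !inE => /andP[zc /andP[zx Hz]] /andP[z'c /andP[z'x Hz']].
  case: (eqVneq z s) => [->|zs]; case: (eqVneq z' s) => [->|z's] //.
  + have HB' : z' \in bunch e x s by apply: Hrest; rewrite ?inC.
    rewrite [c0 s]c0_s // (c0_Bs Hs si sj HB' z'c) => E.
    by move: z'c; rewrite -(beta_inj Hs sj cB HB' E) eqxx.
  + have HB : z \in bunch e x s by apply: Hrest; rewrite ?inC.
    rewrite [c0 s]c0_s // (c0_Bs Hs si sj HB zc) => E.
    by move: zc; rewrite -(beta_inj Hs sj cB HB (esym E)) eqxx.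
  + have HB : z \in bunch e x s by apply: Hrest; rewrite ?inC.
    have HB' : z' \in bunch e x s by apply: Hrest; rewrite ?inC.
    rewrite (c0_Bs Hs si sj HB zc) (c0_Bs Hs si sj HB' z'c).
    exact: beta_inj Hs sj HB HB'.
Qed.

Definition D := cnbhd e x :|: S2 e x.

Lemma injb b : b \in cnbhd e x -> {in cnbhd e b &, injective c0}.
Proof.
rewrite inC => /orP[/eqP->|Hb]; first exact: inj_x.
case: (eqVneq b xi) => [->|bi]; first exact: inj_xi.
case: (eqVneq b xj) => [->|bj]; first exact: inj_xj.
exact: inj_s.
Qed.

Lemma S2_bunch z : z \in S2 e x -> exists a, e x a /\ z \in bunch e x a.
Proof.
rewrite inE => /andP[/andP[zx _] /existsP[a /andP[H1 H2]]].
by exists a; split=> //; rewrite inB zx.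
Qed.

Lemma D_cases z : z \in D -> [\/ z = x, z \in A | exists a, [/\ e x a, z \in bunch e x a & z \notin A]].
Proof.
rewrite inE inC => /orP[/orP[/eqP->|H]|H]; first by constructor 1.
  by constructor 2; rewrite inA.
case: (S2_bunch H) => a [Ha Hz]; constructor 3; exists a; split=> //.
by case/andP: (bunch_notA Ha Hz).
Qed.

Lemma proper_XR u v b : u \in Xj -> e x b -> b != xj -> v \in bunch e x b -> e u v -> c0 u != c0 v.
Proof.
move=> uX Hb bj vB Huv.
case/andP: (bunch_notA Hb vB) => vA vx.
case/andP: (betaP Hb bj vB) => bX bv.
have Eb : beta v = u.
  apply: (inB_uniq (t := xj) (w := v)) => //; last by rewrite Hsym.
  by apply: contraNneq vA => ->; rewrite inA.
rewrite c0_Xj // (c0_B Hb bj vB) Eb.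
case: (eqVneq u u0) => [Eu|nu]; case: ifP => Hvv.
- exfalso; have H1 : e v u0 by rewrite Hsym -Eu.
  have H2 : e u0 v0 by rewrite Hsym v0u0.
  exact: (Htri Hvv H1 H2).
- by apply/negP => /eqP E; move: uX; rewrite -E (negbTE xj_notXj).
- have Hu : u \in Xj :\ u0 by rewrite !inE nu -inB.
  case/andP: (sigP Hu) => H _; apply/negP => /eqP E; move: H; rewrite E in_setD1 => /andP[_].
  by rewrite (negbTE xj_notXj).
- have Hu : u \in Xj :\ u0 by rewrite !inE nu -inB.
  by case/andP: (sigP Hu).
Qed.

Lemma proper_RR u v a b : e x a -> a != xj -> u \in bunch e x a ->
  e x b -> b != xj -> v \in bunch e x b -> e u v -> c0 u != c0 v.
Proof.
move=> Ha aj uB Hb bj vB Huv.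
case/andP: (betaP Ha aj uB) => bXu bu.
case/andP: (betaP Hb bj vB) => bXv bv.
rewrite (c0_B Ha aj uB) (c0_B Hb bj vB).
case: ifP => Hu; case: ifP => Hv.
- by exfalso; apply: (Htri Hu Huv); rewrite Hsym.
- by apply/negP => /eqP E; move: bXv; rewrite -E (negbTE xj_notXj).
- by apply/negP => /eqP E; move: bXu; rewrite E (negbTE xj_notXj).
- apply/negP => /eqP E.
  have H1 : e v (beta u) by rewrite E.
  have H2 : e (beta u) u by rewrite Hsym.
  exact: (Htri Huv H1 H2).
Qed.

Lemma proper_D u v : u \in D -> v \in D -> e u v -> c0 u != c0 v.
Proof.
have hub : forall u v, (u == x) || (u \in A) -> e u v -> c0 u != c0 v.
  move=> u' v' Hu Huv; apply/negP => /eqP E.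
  have Hb : u' \in cnbhd e x by rewrite inC -inA.
  have := injb Hb (_ : u' \in cnbhd e u') (_ : v' \in cnbhd e u') E.
  move=> H; move: (neq_of Huv); rewrite H ?eqxx //; by rewrite inC ?eqxx ?Huv ?orbT.
move=> Hu Hv Huv.
case: (D_cases Hu) => [Eu|uA|[a [Ha uB uA]]];
  [by apply: hub => //; rewrite Eu eqxx | by apply: hub => //; rewrite uA orbT |].
have HuA : u \notin A := uA.
case: (D_cases Hv) => [Ev|vA|[b [Hb vB vA]]].
- by exfalso; move: HuA; rewrite inA -Ev Hsym Huv.
- rewrite eq_sym; apply: hub; first by rewrite vA orbT.
  by rewrite Hsym.
case: (eqVneq a xj) => [Ea|aj]; case: (eqVneq b xj) => [Eb|bj].
- exfalso; move: uB vB; rewrite Ea Eb !inB => /andP[_ H1] /andP[_ H2].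
  have H3 : e v xj by rewrite Hsym.
  exact: (Htri H1 Huv H3).
- by apply: (proper_XR (b := b)) => //; rewrite -Ea.
- rewrite eq_sym; apply: (proper_XR (b := a)) => //; first by rewrite -Eb.
  by rewrite Hsym.
- exact: (proper_RR Ha aj uB Hb bj vB).
Qed.

Lemma c0_in z : z \in D -> c0 z \in cnbhd e xj.
Proof.
have Xin : forall y, y \in Xj -> y \in cnbhd e xj.
  by move=> y; rewrite inB inC => /andP[_ ->]; rewrite orbT.
move=> Hz; case: (D_cases Hz) => [->|zA|[a [Ha zB zA]]].
- by rewrite c0_x inC Hsym Hxj orbT.
- case: (eqVneq z xi) => [->|zi]; first by rewrite c0_xi inC eqxx.
  case: (eqVneq z xj) => [->|zj]; first by rewrite c0_xj Xin // u0X.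
  rewrite c0_s // Xin //; have Hs : e x z by rewrite -inA.
  by case/andP: (bcn Hs zi zj).
- case: (eqVneq a xj) => [Ea|aj].
    have zX : z \in Xj by rewrite -Ea.
    rewrite c0_Xj //; case: ifP; first by rewrite inC eqxx.
    move/negbT => zu.
    have Hu : z \in Xj :\ u0 by rewrite !inE zu -inB.
    by case/andP: (sigP Hu) => H _; apply: Xin; move: H; rewrite inE => /andP[].
  rewrite (c0_B Ha aj zB); case: ifP => _; first by rewrite inC eqxx.
  by case/andP: (betaP Ha aj zB) => H _; apply: Xin.
Qed.

Lemma nb_D b y : b \in cnbhd e x -> y \in cnbhd e b -> y \in D.
Proof.
rewrite /D in_setU.
move=> Hb0 Hy; have := Hb0; rewrite inC => /orP[/eqP Eb|Hb].
  by move: Hy; rewrite Eb => ->.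
move: Hy; rewrite inC => /orP[/eqP->|Hby]; first by rewrite Hb0.
case: (eqVneq y x) => [->|yx]; first by rewrite inC eqxx.
apply/orP; right; rewrite inE yx /=.
apply/andP; split.
  by apply/negP => Hxy; apply: (Htri Hb Hby); rewrite Hsym.
by apply/existsP; exists b; rewrite Hb Hby.
Qed.

Lemma bcol : b_colorable e d.+1.
Proof.
have Hx0 : xj \in cnbhd e xj by rewrite inC eqxx.
have Hcard : #|cnbhd e xj| = d.+1 by apply: card_cnbhd.
pose h y := cast_ord Hcard (enum_rank_in Hx0 y).
have hinj : {in cnbhd e xj &, injective h}.
  move=> y y' Hy Hy' /cast_ord_inj E.
  by rewrite -(enum_rankK_in Hx0 Hy) -(enum_rankK_in Hx0 Hy') E.
have hdeg : forall v, #|nbhd e v| < d.+1 by move=> v; rewrite Hreg.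
have hp : forall u v, u \in D -> v \in D -> e u v -> h (c0 u) != h (c0 v).
  move=> u v Hu Hv Huv; apply/negP => /eqP E.
  move: (proper_D Hu Hv Huv); rewrite (hinj _ _ (c0_in Hu) (c0_in Hv) E) eqxx.
  by [].
have [c [Hc1 Hc2]] := @greedy T e Hirr Hsym d.+1 D (fun y => h (c0 y)) hdeg hp.
have cinj : forall b, b \in cnbhd e x -> {in cnbhd e b &, injective c}.
  move=> b Hb y y' Hy Hy' E.
  have Dy := nb_D Hb Hy; have Dy' := nb_D Hb Hy'.
  rewrite !Hc1 // in E.
  exact: (injb Hb Hy Hy' (hinj _ _ (c0_in Dy) (c0_in Dy') E)).
have surj : forall b, b \in cnbhd e x -> forall a, exists2 y, y \in cnbhd e b & c y = a.
  move=> b Hb; apply: inj_surj; [exact: card_cnbhd | exact: cinj].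
have xx : x \in cnbhd e x by rewrite inC eqxx.
apply/existsP; exists [ffun v => c v]; apply/andP; split.
  apply/forallP => u; apply/forallP => v; apply/implyP => Huv; rewrite !ffunE; exact: Hc2.
apply/forallP => a; case: (surj x xx a) => b Hb Eb.
apply/existsP; exists b; rewrite ffunE Eb eqxx /=.
apply/forallP => a'; case: (surj b Hb a') => u Hu Eu.
by apply/existsP; exists u; rewrite Hu ffunE Eu eqxx.
Qed.

End Struct.

Lemma bcol_le (T : finType) (e : rel T) d k : irreflexive e -> regular e d ->
  b_colorable e k -> k <= d.+1.
Proof.
move=> Hirr Hreg /existsP[c /andP[_ /forallP H]].
case: k c H => [//|k] c H.
have /existsP[v /andP[_ /forallP Hv]] := H ord0.
have : [set: 'I_k.+1] \subset c @: cnbhd e v.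
  apply/subsetP => b _; case/existsP: (Hv b) => u /andP[Hu /eqP <-].
  by apply: imset_f.
move/subset_leq_card; rewrite cardsT card_ord => H1.
by rewrite -(card_cnbhd Hirr v Hreg); apply: (leq_trans H1); apply: leq_imset_card.
Qed.

Theorem mainTheorem8 (T : finType) (e : rel T) (d : nat) :
  simple_graph e -> 7 <= d -> regular e d -> girth_eq e 5 ->
  (exists x xi xj : T,
     [/\ e x xi, e x xj, xi != xj &
         forall v u, v \in bunch e x xi :|: bunch e x xj -> e v u ->
           u \in N2 e x]) ->
  b_chromatic e = d.+1.
Proof.
move=> [Hirr Hsym] Hd Hreg [_ Hg] [x [xi [xj [Hxi Hxj Hij HN]]]].
have Htri := no_tri_of Hirr (Hg 3 isT).
have Hsq := no_sq_of Hirr (Hg 4 isT).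
have [v0 Hv0] : exists v0, v0 \in bunch e x xi.
  by apply/set0Pn; rewrite -card_gt0 (card_bunch Hsym Hreg Hxi); lia.
have Hd3 : 3 < d by lia.
have Hb := bcol Hirr Hsym Hreg Hd3 Htri Hsq Hxi Hxj Hij HN Hv0.
apply/eqP; rewrite eqn_leq; apply/andP; split.
  by apply/bigmax_leqP => k Hk; exact: (bcol_le Hirr Hreg Hk).
have Hle : d.+1 < #|T|.+1.
  by rewrite ltnS -(card_cnbhd Hirr x Hreg) max_card.
rewrite /b_chromatic.
have := @leq_bigmax_cond _ (fun k : 'I_#|T|.+1 => b_colorable e k) (fun k => nat_of_ord k) (Ordinal Hle) Hb.
by [].
Qed.
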